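(* If $X$ is a finite quasi-metric space, then \[ |X|_{\mathbb{Q}(q^\mathbb{R})} = \sum_{n=0}^\infty (-1)^n \,\mathrm{rk}\, \mathit{HM}_n(X)\] in $\mathbb{Q}(\!(q^\mathbb{R})\!)$, the infinite sum converging in the topology of $\mathbb{Q}(\!(q^\mathbb{R})\!)$.
   Context: A quasi-metric space is a skeletal $[0,\infty)$-enriched category ($d(x,x)=0$, triangle inequality, $d(x,y)>0$ for $x\ne y$, not necessarily symmetric). $\mathbb{Q}(q^\mathbb{R})$ is the field of generalized rational functions (fractions of finite sums $\sum a_i q^{\ell_i}$, $a_i\in\mathbb{Q}$, $\ell_i\in\mathbb{R}$), embedded in the field $\mathbb{Q}(\!(q^\mathbb{R})\!)$ of Hahn series (formal $\sum_\ell a_\ell q^\ell$ with well-ordered support), which carries the valuation topology (a series converges iff the smallest exponents of its terms tend to $\infty$). The magnitude $|X|_{\mathbb{Q}(q^\mathbb{R})}$ is the sum of all entries of the inverse of the matrix $Z_X(x,y)=q^{d(x,y)}$ (which is invertible over $\mathbb{Q}(q^\mathbb{R})$ for finite quasi-metric spaces). Magnitude homology: $\mathit{HM}_n(X)=\{\mathit{HM}^\ell_n(X)\}_{\ell\in\mathbb{R}}$, where $\mathit{HM}^\ell_n(X)$ is the degree-$n$ homology of the chain complex whose $n$-chains in grading $\ell$ are freely generated by tuples $(x_0,\dots,x_n)$ with $x_i\neq x_{i+1}$ and $d(x_0,x_1)+\cdots+d(x_{n-1},x_n)=\ell$, with boundary $\sum_i(-1)^i d^i$ where $d^i$ deletes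 $x_i$ if $d(x_{i-1},x_i)+d(x_i,x_{i+1})=d(x_{i-1},x_{i+1})$ (for interior $i$; endpoint deletions always change the distance) and is $0$ otherwise. Its rank $\mathrm{rk}\,\mathit{HM}_n(X)$ is the Hahn series $\sum_\ell \mathrm{rk}(\mathit{HM}^\ell_n(X))\,q^\ell$. *)

(* Defs.v *)
From HB Require Import structures.
From mathcomp Require Import all_boot all_order all_algebra.
From mathcomp Require Import reals.

Set Implicit Arguments.
Unset Strict Implicit.
Unset Printing Implicit Defensive.

Import Order.TTheory GRing.Theory Num.Theory.
Local Open Scope ring_scope.

Section Magnitude.
Variable R : realType.

(* A quasi-metric on a finite type X: a skeletal [0,oo)-enriched category. *)
Definition is_quasi_metric (X : finType) (d : X -> X -> R) : Prop :=
  [/\ forall x y, 0 <= d x y,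
      forall x, d x x = 0,
      forall x y z, d x z <= d x y + d y z
    & forall x y, x != y -> 0 < d x y].

(* A formal series sum_l f(l) q^l is represented by its coefficient
   function f : R -> rat; it is a Hahn series iff its support is
   well-ordered (every nonempty subset of the support has a least
   element). *)
Definition hahn (f : R -> rat) : Prop :=
  forall S : R -> Prop, (forall l, S l -> f l != 0) -> (exists l, S l) ->
    exists m, S m /\ (forall l, S l -> m <= l).

(* Convergence of a sequence of Hahn series s_N to h in the valuation
   topology: the smallest exponent of h - s_N tends to +oo, i.e. for
   every bound L, eventually h and s_N have the same coefficients at
   all exponents l < L. *)
Definition hahn_converges (s : nat -> R -> rat) (h : R -> rat) : Prop :=
  forall L : R, exists N0 : nat, forall N, (N0 <= N)%N ->
    forall l, l < L -> s N l = h l.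

(* The similarity matrix Z_X(x,y) = q^{d(x,y)} has inverse W over the
   Hahn series field iff  sum_z q^{d(x,z)} W(z,y) = delta_{x,y} q^0.
   Multiplication of a Hahn series by the monomial q^a shifts exponents
   by a, so the coefficient of q^l in q^{d(x,z)} W(z,y) is W(z,y)(l - d(x,z)). *)
Definition is_inverse_similarity (X : finType) (d : X -> X -> R)
    (W : X -> X -> R -> rat) : Prop :=
  forall x y l,
    \sum_(z : X) W z y (l - d x z) = (if (x == y) && (l == 0) then 1 else 0).

Section MH.
Variables (X : finType) (d : X -> X -> R).

Definition chain_len (s : seq X) : R :=
  if s is x :: s' then \sum_(r <- pairmap d x s') r else 0.

(* generators of MC^l_n: tuples (x0,...,xn) with x_i != x_{i+1} and length l *)
Definition MC (l : R) (n : nat) : {set (n.+1).-tuple X} :=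
  [set t : (n.+1).-tuple X | sorted (fun a b => a != b) t & chain_len t == l].

Definition del_at (k : nat) (s : seq X) : seq X := take k s ++ drop k.+1 s.

(* Matrix (over Q, row-vector convention) of the boundary
   MC^l_{n+1} -> MC^l_n,  sum_k (-1)^k d^k, where d^k deletes x_k if this
   preserves the length and is 0 otherwise.  Entry (i,j) is the
   coefficient of the j-th generator of degree n in the boundary of the
   i-th generator of degree n+1. *)
Definition MH_bd (l : R) (n : nat) : 'M[rat]_(#|MC l n.+1|, #|MC l n|) :=
  \matrix_(i, j)
    let t : seq X := val (enum_val (A := MC l n.+1) i) in
    let u : seq X := val (enum_val (A := MC l n) j) in
    \sum_(k < n.+2 | (chain_len (del_at k t) == chain_len t)
                     && (del_at k t == u))
       (-1) ^+ k.

(* rank of HM^l_n(X) = dim_Q (ker d_n / im d_{n+1}) *)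
Definition MH_rank (l : R) (n : nat) : nat :=
  match n with
  | 0 => #|MC l 0| - \rank (MH_bd l 0)
  | n'.+1 => \rank (kermx (MH_bd l n')) - \rank (MH_bd l n'.+1)
  end.

(* rk HM_n(X) as a Hahn series: sum_l rk(HM^l_n(X)) q^l *)
Definition rkHM (n : nat) : R -> rat := fun l => (MH_rank l n)%:R.

Definition euler_partial (N : nat) : R -> rat :=
  fun l => \sum_(n < N) (-1) ^+ n * rkHM n l.

End MH.
End Magnitude.

(* Main.v *)
Require Import Defs.
From HB Require Import structures.
From mathcomp Require Import all_boot all_order all_algebra.
From mathcomp Require Import reals.
From mathcomp Require Import ring lra.
From Stdlib Require Classical_Prop.
Import Order.TTheory GRing.Theory Num.Theory.
Local Open Scope ring_scope.
Set Implicit Arguments.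
Unset Strict Implicit.
Unset Printing Implicit Defensive.



Section Seqs.
Variables (R : realType) (X : finType) (d : X -> X -> R).
Hypothesis hd : is_quasi_metric d.
Implicit Types (x y z : X) (s : seq X).

Lemma d_ge0 x y : 0 <= d x y. Proof. by case: hd. Qed.
Lemma d_xx x : d x x = 0. Proof. by case: hd. Qed.
Lemma d_tri x y z : d x z <= d x y + d y z. Proof. by case: hd. Qed.
Lemma d_gt0 x y : x != y -> 0 < d x y. Proof. by case: hd => _ _ _; apply. Qed.

Lemma chain_len_nil : chain_len d [::] = 0. Proof. by []. Qed.
Lemma chain_len1 x : chain_len d [:: x] = 0. Proof. by rewrite /chain_len /= big_nil. Qed.
Lemma chain_len_cons2 x y s :
  chain_len d [:: x, y & s] = d x y + chain_len d (y :: s).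
Proof. by rewrite /chain_len /= big_cons. Qed.

Lemma del_at0 x s : del_at 0 (x :: s) = s.
Proof. by rewrite /del_at /= drop0. Qed.
Lemma del_atS k x s : del_at k.+1 (x :: s) = x :: del_at k s.
Proof. by []. Qed.
Lemma del_at_nil k : del_at k [::] = [::] :> seq X.
Proof. by case: k. Qed.

Lemma size_del k (s : seq X) : (k < size s)%N -> size (del_at k s) = (size s).-1.
Proof.
elim: s k => [|x s IH] [|k] //; first by rewrite del_at0.
move=> hk; rewrite del_atS /= IH //; by case: s IH hk.
Qed.

Lemma del_del k' k (s : seq X) : (k' < k)%N ->
  del_at k' (del_at k s) = del_at k.-1 (del_at k' s).
Proof.
elim: s k k' => [|x s IH] k k'; first by rewrite !del_at_nil.
case: k => // k; case: k' => [_|k' hk].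
  by rewrite del_atS !del_at0.
case: k hk => // k hk.
by rewrite !del_atS IH.
Qed.

Lemma len_ge0 (s : seq X) : 0 <= chain_len d s.
Proof.
elim: s => [|x [|y s] IH]; rewrite ?chain_len1 //.
by rewrite chain_len_cons2 addr_ge0 // d_ge0.
Qed.

Lemma len_del_le k (s : seq X) : chain_len d (del_at k s) <= chain_len d s.
Proof.
elim: s k => [|x s IH] k; first by rewrite del_at_nil.
case: k => [|k].
  rewrite del_at0; case: s IH => [|y s] IH; first by rewrite chain_len1.
  by rewrite chain_len_cons2 lerDr; apply: d_ge0.
case: s IH => [|y s] IH; first by rewrite del_atS del_at_nil.
case: k => [|k].
  rewrite del_atS del_at0; case: s IH => [|z s] IH.
    by rewrite chain_len_cons2 !chain_len1 addr0 d_ge0.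
  rewrite !chain_len_cons2 addrA lerD2r; exact: d_tri.
rewrite del_atS del_atS chain_len_cons2 -del_atS chain_len_cons2 lerD2l.
have := IH k.+1; by rewrite del_atS.
Qed.

Lemma sorted_del k (s : seq X) : sorted (fun a b => a != b) s ->
  chain_len d (del_at k s) = chain_len d s -> sorted (fun a b => a != b) (del_at k s).
Proof.
elim: s k => [|x s IH] k; first by rewrite del_at_nil.
case: k => [|k].
  by rewrite del_at0 => /path_sorted.
case: s IH => [|y s] IH; first by rewrite del_atS del_at_nil.
case: k => [|k].
  rewrite del_atS del_at0 => hs0; have /andP[xy hs] : (x != y) && sorted (fun a b => a != b) (y :: s) by exact: hs0.
  case: s IH hs hs0 => [|z s] IH hs hs0; first by rewrite !chain_len1.
  rewrite !chain_len_cons2 addrA => /addIr hl.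
  move: hs => /= /andP[yz ->]; rewrite andbT.
  apply/eqP => exz; move: hl; rewrite -exz d_xx => hl.
  have h1 := d_gt0 xy; have h2 := d_ge0 y x; move: hl h1 h2; clear; lra.
move=> hs0; have /andP[xy hs] : (x != y) && sorted (fun a b => a != b) (y :: s) by exact: hs0.
rewrite del_atS del_atS chain_len_cons2 -del_atS chain_len_cons2 => /addrI hl.
have := IH k.+1 hs hl; rewrite del_atS /= => ->; by rewrite xy.
Qed.

Lemma len_lb (del : R) : (forall x y, x != y -> del <= d x y) ->
  forall s : seq X, sorted (fun a b => a != b) s ->
  ((size s).-1)%:R * del <= chain_len d s.
Proof.
move=> hdel; elim => [|x [|y s] IH]; first by rewrite mul0r.
  by rewrite chain_len1 mul0r.
move=> hs0; have /andP[xy hs] : (x != y) && sorted (fun a b => a != b) (y :: s) by exact: hs0.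
change ((size s).+1%:R * del <= chain_len d [:: x, y & s]).
rewrite chain_len_cons2 -[(size s).+1]addn1 natrD mulrDl mul1r addrC.
by apply: lerD; [exact: hdel | exact: IH].
Qed.

End Seqs.



Lemma invol_sum (f : nat -> nat -> rat) N :
  (forall a b, (a <= b)%N -> f b.+1 a = - f a b) ->
  \sum_(0 <= k < N.+1) \sum_(0 <= k' < N) f k k' = 0.
Proof.
move=> hf.
have E : forall k, \sum_(0 <= k' < N) f k k' =
   \sum_(0 <= k' < N | (k' < k)%N) f k k' + \sum_(0 <= k' < N | ~~ (k' < k)%N) f k k'.
  by move=> k; rewrite (bigID (fun k' => (k' < k)%N)).
under eq_bigr do rewrite E.
rewrite big_split /=.
have P1 : \sum_(0 <= k < N.+1) \sum_(0 <= k' < N | (k' < k)%N) f k k' =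
    - \sum_(0 <= b < N) \sum_(0 <= a < N | (a <= b)%N) f a b.
  rewrite big_nat_recl // big1 ?add0r; last by move=> i; rewrite ltn0.
  rewrite -sumrN; apply: eq_bigr => b _; rewrite -sumrN.
  by apply: eq_bigr => a hab; rewrite hf.
have P2 : \sum_(0 <= k < N.+1) \sum_(0 <= k' < N | ~~ (k' < k)%N) f k k' =
    \sum_(0 <= b < N) \sum_(0 <= a < N | (a <= b)%N) f a b.
  rewrite big_nat_recr //= [X in _ + X]big_nat_cond [X in _ + X]big1 ?addr0; last first.
    by move=> j /andP[/andP[_ hj]]; rewrite hj.
  rewrite !big_mkord.
  rewrite (exchange_big_dep xpredT) //=.
  rewrite !big_mkord.
  apply: eq_bigr => b _; rewrite big_mkord.
  by apply: eq_bigl => a; rewrite -leqNgt.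
by rewrite P1 P2 addNr.
Qed.



Section BD.
Variables (R : realType) (X : finType) (d : X -> X -> R).
Hypothesis hd : is_quasi_metric d.
Implicit Types (x y z : X) (s t u w : seq X).

Definition bcoef t u : rat :=
  \sum_(0 <= k < size t | (chain_len d (del_at k t) == chain_len d t) && (del_at k t == u))
    (-1) ^+ k.

Lemma MH_bdE l n i j : MH_bd d l n i j =
  bcoef (val (enum_val (A := MC d l n.+1) i)) (val (enum_val (A := MC d l n) j)).
Proof. by rewrite mxE /bcoef size_tuple big_mkord. Qed.

Lemma bd_bd l n : MH_bd d l n.+1 *m MH_bd d l n = 0.
Proof.
apply/matrixP => i j; rewrite !mxE.
under eq_bigr do rewrite !MH_bdE.
set t := val (enum_val i); set w := val (enum_val j).
rewrite -(big_enum_val (fun v : (n.+2).-tuple X => bcoef t (val v) * bcoef (val v) w)) /=.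
have [st [stor slen]] : size t = n.+3 /\ sorted (fun a b => a != b) t /\ chain_len d t = l.
  have := enum_valP i; rewrite inE => /andP[h1 /eqP h2].
  by rewrite /t size_tuple h1 h2.
clearbody t.
have E1 : forall v : (n.+2).-tuple X, bcoef t v = \sum_(0 <= k < size t)
   (if (chain_len d (del_at k t) == chain_len d t) && (del_at k t == v) then (-1) ^+ k else 0).
  by move=> v; rewrite /bcoef big_mkcond.
under eq_bigr do rewrite E1 mulr_suml.
rewrite exchange_big /=.
pose P k := chain_len d (del_at k t) == chain_len d t.
have E2 : forall k, (k < size t)%N ->
  \sum_(v in MC d l n.+1) (if P k && (del_at k t == v) then (-1) ^+ k else 0) * bcoef v w
  = if P k then (-1) ^+ k * bcoef (del_at k t) w else 0.
  move=> k hk; case hP: (P k); last by rewrite big1 // => v _; rewrite mul0r.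
  have hs : size (del_at k t) == n.+2 by rewrite size_del // st.
  pose v0 : (n.+2).-tuple X := Tuple hs.
  have v0in : v0 \in MC d l n.+1.
    rewrite inE /= (sorted_del hd) //; last exact/eqP.
    by rewrite (eqP hP) slen eqxx.
  rewrite (bigD1 v0) //= eqxx big1 ?addr0 //.
  move=> v /andP[_ hv]; case: eqP; rewrite ?mul0r // => ev.
  by move: hv; rewrite (_ : v = v0) ?eqxx //; apply: val_inj; rewrite /= ev.
rewrite (eq_big_nat _ _ (fun k hk => E2 k (proj2 (andP hk)))).
pose f k k' : rat := if (chain_len d (del_at k' (del_at k t)) == chain_len d t)
   && (del_at k' (del_at k t) == w) then (-1) ^+ (k + k') else 0.
have E3 : forall k, (0 <= k < size t)%N ->
  (if P k then (-1) ^+ k * bcoef (del_at k t) w else 0) = \sum_(0 <= k' < n.+2) f k k'.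
  move=> k /andP[_ hk]; rewrite /f; case hP: (P k).
    rewrite /bcoef size_del // st /= mulr_sumr big_mkcond /=.
    apply: eq_bigr => k' _; rewrite (eqP hP).
    by case: ifP => _ //; rewrite exprD.
  rewrite big1 // => k' _; case: ifP => // /andP[/eqP h _].
  have h1 := len_del_le hd k' (del_at k t); have h2 := len_del_le hd k t.
  have : P k by rewrite /P eq_le h2 -h h1.
  by rewrite hP.
rewrite (eq_big_nat _ _ E3) st.
apply: invol_sum => a b hab.
rewrite /f del_del //=.
case: ifP => _; last by rewrite oppr0.
by rewrite addSn addnC exprS mulN1r.
Qed.
End BD.



Section EP.
Variables (R : realType) (X : finType) (d : X -> X -> R).
Hypothesis hd : is_quasi_metric d.

Lemma rank_sum l n :
  (\rank (MH_bd d l n.+1) + \rank (MH_bd d l n) <= #|MC d l n.+1|)%N.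
Proof.
have := mxrankS (introT sub_kermxP (bd_bd hd l n)).

rewrite mxrank_ker => h.
have h2 := rank_leq_row (MH_bd d l n).
rewrite -(leq_add2r (\rank (MH_bd d l n))) in h.
by rewrite (leq_trans h) // subnK.
Qed.

Lemma euler_aux l N :
  \sum_(n < N.+1) (-1) ^+ n * (MH_rank d l n)%:R =
  \sum_(n < N.+1) (-1) ^+ n * (#|MC d l n|)%:R
    - (-1) ^+ N * (\rank (MH_bd d l N))%:R :> rat.
Proof.
elim: N => [|N IH].
  rewrite !big_ord1 /= natrB ?rank_leq_col //; ring.
rewrite [LHS]big_ord_recr /= IH [in RHS]big_ord_recr /=.
have h := rank_sum l N.
have h1 : (\rank (MH_bd d l N) <= #|MC d l N.+1|)%N by apply: rank_leq_row.
rewrite mxrank_ker natrB; last by rewrite -(leq_add2r (\rank (MH_bd d l N))) subnK // addnC.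
rewrite natrB // exprS; ring.
Qed.

Lemma euler_rank l N : MC d l N = set0 ->
  \sum_(n < N) (-1) ^+ n * (MH_rank d l n)%:R =
  \sum_(n < N) (-1) ^+ n * (#|MC d l n|)%:R :> rat.
Proof.
case: N => [|N] h0; first by rewrite !big_ord0.
rewrite euler_aux.
have : (\rank (MH_bd d l N) <= 0)%N.
  by apply: leq_trans (rank_leq_row _) _; rewrite h0 cards0.
by rewrite leqn0 => /eqP ->; rewrite mulr0 subr0.
Qed.
End EP.



Lemma sum_tupleS (X : finType) (n : nat) (F : (n.+1).-tuple X -> rat) :
  \sum_(t : (n.+1).-tuple X) F t = \sum_(a : X) \sum_(t : n.-tuple X) F [tuple of a :: t].
Proof.
rewrite [RHS]pair_big /= (reindex (fun p : X * n.-tuple X => [tuple of p.1 :: p.2])) /=.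
  by apply: eq_bigl.
exists (fun t : (n.+1).-tuple X => (thead t, [tuple of behead t])) => [[a t]|t] _ /=.
  by rewrite theadE; congr pair; apply: val_inj.
by rewrite [RHS]tuple_eta.
Qed.

Lemma sum_tuple0 (X : finType) (F : 0.-tuple X -> rat) :
  \sum_(t : 0.-tuple X) F t = F [tuple].
Proof.
rewrite (big_pred1 [tuple]) // => t /=; apply/esym/eqP; exact: tuple0.
Qed.

Section Mag.
Variables (R : realType) (X : finType) (d : X -> X -> R).
Hypothesis hd : is_quasi_metric d.
Implicit Types (x y z a : X) (s : seq X) (l : R).

Definition chainP l x y s : bool :=
  [&& sorted (fun a b => a != b) s, chain_len d s == l, head x s == x & last x s == y].

Definition cc k x y l : rat := \sum_(t : (k.+1).-tuple X) (chainP l x y t)%:R.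

Lemma tval_eta k (t : (k.+1).-tuple X) : val t = thead t :: behead t.
Proof. by rewrite {1}(tuple_eta t). Qed.

Lemma chainP_cons2 l x y a z s :
  chainP l x y [:: a, z & s] = [&& a == x, x != z & chainP (l - d x z) z y (z :: s)].
Proof.
rewrite /chainP chain_len_cons2.
have -> : (d a z + chain_len d (z :: s) == l) = (chain_len d (z :: s) == l - d a z).
  by apply/eqP/eqP => h; [rewrite -h addrC addKr | rewrite h addrC subrK].
case: (a =P x) => [<-|/eqP/negbTE ne] /=; last by rewrite !andbF.
by rewrite eqxx /= -!andbA.
Qed.

Lemma chainP_tcons k l x y a (t : (k.+1).-tuple X) :
  chainP l x y [tuple of a :: t] =
  [&& a == x, x != thead t & chainP (l - d x (thead t)) (thead t) y t].
Proof. by rewrite /= tval_eta chainP_cons2. Qed.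

Lemma cc_S k x y l : cc k.+1 x y l = \sum_(z | z != x) cc k z y (l - d x z).
Proof.
rewrite /cc sum_tupleS (bigD1 x) //= [X in _ + X]big1 ?addr0; last first.
  by move=> a ha; apply: big1 => t _; rewrite chainP_tcons (negbTE ha).
under eq_bigr do rewrite chainP_tcons eqxx /=.
rewrite (partition_big (fun t : (k.+1).-tuple X => thead t) xpredT) //=.
rewrite [RHS]big_mkcond /=; apply: eq_bigr => z _.
under eq_bigr => t /eqP ht do rewrite ht.
rewrite eq_sym; case: (z != x); last by rewrite big1.
rewrite [RHS](bigID (fun t : (k.+1).-tuple X => thead t == z)) /= [X in _ = _ + X]big1 ?addr0 //.
move=> t ht; rewrite /chainP tval_eta /=.
by rewrite (negbTE ht) !andbF.
Qed.

Lemma cc_0 x y l : cc 0 x y l = ((x == y) && (l == 0))%:R.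
Proof.
rewrite /cc sum_tupleS; under eq_bigr do rewrite sum_tuple0.
rewrite (bigD1 x) //= big1 ?addr0; last first.
  by move=> a ha; rewrite /chainP /= (negbTE ha) !andbF.
by rewrite /chainP chain_len1 /= eqxx /= [0 == l]eq_sym andbC.
Qed.

End Mag.



Section Mag2.
Variables (R : realType) (X : finType) (d : X -> X -> R).
Hypothesis hd : is_quasi_metric d.
Implicit Types (x y z a : X) (s : seq X) (l : R).

Definition delta : R := \big[Order.min/1]_(p : X * X | p.1 != p.2) d p.1 p.2.

Lemma delta_gt0 : 0 < delta.
Proof.
rewrite /delta; apply: (big_ind (fun v => 0 < v)) => //.
  by move=> u v hu hv; rewrite lt_min hu hv.
by move=> [x y] /= hxy; apply: d_gt0.
Qed.

Lemma delta_le x y : x != y -> delta <= d x y.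
Proof.
move=> hxy; rewrite /delta (bigD1 (x, y)) //=.
by rewrite ge_min lexx.
Qed.

Definition Kb l : nat := Num.bound (`|l| / delta).

Lemma Kb_spec l : l < (Kb l)%:R * delta.
Proof.
have h := archi_boundP (divr_ge0 (normr_ge0 l) (ltW delta_gt0)).
rewrite -ltr_pdivrMr ?delta_gt0 //; apply: le_lt_trans h.
by rewrite ler_pM2r ?invr_gt0 ?delta_gt0 // ler_norm.
Qed.

Lemma MC_lb l k t : t \in MC d l k -> k%:R * delta <= l.
Proof.
rewrite inE => /andP[hs /eqP <-].
have := len_lb (@delta_le) hs; by rewrite size_tuple.
Qed.

Lemma MC_empty l k : l < k%:R * delta -> MC d l k = set0.
Proof.
move=> hl; apply/setP => t; rewrite in_set0; apply/negP => /MC_lb h.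
by move: (lt_le_trans hl h); rewrite ltxx.
Qed.

Lemma cc_zero k x y l : l < k%:R * delta -> cc d k x y l = 0.
Proof.
move=> hl; apply: big1 => t _.
case h: (chainP d l x y t) => //.
have : t \in MC d l k by move: h; rewrite /chainP inE => /and4P[-> -> _ _].
by rewrite MC_empty // inE.
Qed.

Lemma sum_cc k l : \sum_x \sum_y cc d k x y l = (#|MC d l k|)%:R.
Proof.
rewrite /cc; under eq_bigr => x _ do rewrite exchange_big.
rewrite exchange_big /= -sum1_card natr_sum [RHS]big_mkcond /=.
apply: eq_bigr => t _.
rewrite tval_eta (bigD1 (thead t)) //= [X in _ + X]big1 ?addr0; last first.
  by move=> x hx; apply: big1 => y _; rewrite /chainP /= [thead t == x]eq_sym (negbTE hx) !andbF.
rewrite (bigD1 (last (thead t) (behead t))) //= [X in _ + X]big1 ?addr0; last first.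
  by move=> y hy; rewrite /chainP /= [_ == y]eq_sym (negbTE hy) !andbF.
rewrite /chainP /= !eqxx !andbT inE [in RHS]tval_eta /=.
by case: (_ && _).
Qed.

End Mag2.



Lemma sum_ext (F : nat -> rat) M1 M2 :
  (forall k, (M1 <= k)%N -> F k = 0) -> (forall k, (M2 <= k)%N -> F k = 0) ->
  \sum_(0 <= k < M1) F k = \sum_(0 <= k < M2) F k.
Proof.
wlog h12 : M1 M2 / (M1 <= M2)%N.
  move=> H h1 h2; case: (leqP M1 M2) => h; first exact: H.
  by symmetry; apply: H => //; apply: ltnW.
move=> h1 _; rewrite [RHS](big_cat_nat (n := M1)) //=.
rewrite [X in _ = _ + X]big_nat_cond [X in _ = _ + X]big1 ?addr0 //.
by move=> k /andP[/andP[hk _] _]; apply: h1.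
Qed.

Lemma list_min (R : realType) (s : seq R) (S : R -> Prop) :
  (exists2 l, l \in s & S l) ->
  exists m, [/\ m \in s, S m & forall l, l \in s -> S l -> m <= l].
Proof.
elim: s => [[l]|a s IH]; first by rewrite in_nil.
move=> hex.
case: (Classical_Prop.classic (exists2 l, l \in s & S l)) => [/IH [m [ms Sm hm]]|hn].
  case: (Classical_Prop.classic (S a /\ a <= m)) => [[Sa am]|hn].
    exists a; split => //; first by rewrite mem_head.
    move=> l; rewrite in_cons => /orP[/eqP -> //|ls Sl].
    exact: le_trans am (hm l ls Sl).
  exists m; split => //; first by rewrite in_cons ms orbT.
  move=> l; rewrite in_cons => /orP[/eqP -> Sa|ls Sl]; last exact: hm.
  case: (lerP m a) => // ma; case: hn; split => //; exact: ltW.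
case: hex => l; rewrite in_cons => /orP[/eqP ->|ls] Sa; last by case: hn; exists l.
exists a; split => //; first by rewrite mem_head.
move=> l' ; rewrite in_cons => /orP[/eqP -> //|ls Sl].
by case: hn; exists l'.
Qed.

Section Final.
Variables (R : realType) (X : finType) (d : X -> X -> R).
Hypothesis hd : is_quasi_metric d.
Implicit Types (x y z a : X) (s : seq X) (l : R).

Definition Wm x y l : rat := \sum_(0 <= k < Kb d l) (-1) ^+ k * cc d k x y l.

Lemma kdelta_mono (k1 k2 : nat) : (k1 <= k2)%N -> k1%:R * delta d <= k2%:R * delta d.
Proof. by move=> h; rewrite ler_pM2r ?delta_gt0 // ler_nat. Qed.

Lemma W_ext M x y l : l < M%:R * delta d ->
  Wm x y l = \sum_(0 <= k < M) (-1) ^+ k * cc d k x y l.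
Proof.
move=> hM; apply: sum_ext => k hk; rewrite cc_zero ?mulr0 //.
  exact: lt_le_trans (Kb_spec hd l) (kdelta_mono hk).
exact: lt_le_trans hM (kdelta_mono hk).
Qed.

Lemma W_inv : is_inverse_similarity d Wm.
Proof.
move=> x y l.
set M := (Kb d l).+1.
have hM : forall l', l' <= l -> l' < M%:R * delta d.
  move=> l' hl; apply: le_lt_trans hl _.
  exact: lt_le_trans (Kb_spec hd l) (kdelta_mono (leqnSn _)).
have hle : forall z, l - d x z <= l by move=> z; rewrite lerBlDr lerDl d_ge0.
under eq_bigr => z _ do rewrite (W_ext _ _ (hM _ (hle z))).
rewrite (bigD1 x) //= (d_xx hd) subr0.
rewrite exchange_big /=.
under [X in _ + X = _]eq_bigr => k _ do rewrite -mulr_sumr -cc_S.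
have T : \sum_(0 <= k < M.+1) (-1) ^+ k * cc d k x y l =
         \sum_(0 <= k < M) (-1) ^+ k * cc d k x y l.
  by rewrite big_nat_recr //= cc_zero ?mulr0 ?addr0 //; apply: hM.
rewrite big_nat_recl // in T.
have E : \sum_(0 <= k < M) (-1) ^+ k.+1 * cc d k.+1 x y l =
    - \sum_(0 <= k < M) (-1) ^+ k * cc d k.+1 x y l.
  by rewrite -sumrN; apply: eq_bigr => k _; rewrite exprS mulN1r mulNr.
rewrite E expr0 mul1r cc_0 in T.
rewrite -T addrNK.
by case: (_ && _).
Qed.


Lemma W_supp x y l : Wm x y l != 0 -> exists k (t : (k.+1).-tuple X), chainP d l x y t.
Proof.
move=> hW; apply: Classical_Prop.NNPP => hn; move: hW.
rewrite /Wm big1 ?eqxx // => k _; rewrite /cc big1 ?mulr0 // => t _.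
case h: (chainP d l x y t) => //; exfalso; apply: hn; exists k, t; exact: h.
Qed.

Lemma W_hahn x y : hahn (Wm x y).
Proof.
move=> S hS [l0 Sl0].
pose Ls := flatten [seq image (fun t : (k.+1).-tuple X => chain_len d (val t)) predT
                   | k <- iota 0 (Kb d l0)].
have inLs : forall l, S l -> l <= l0 -> l \in Ls.
  move=> l Sl hl; have [k [t ht]] := W_supp (hS l Sl).
  have tin : t \in MC d l k by move: ht; rewrite /chainP inE => /and4P[-> -> _ _].
  have hk : (k < Kb d l0)%N.
    have h1 := MC_lb tin; have h2 := Kb_spec hd l0.
    rewrite -(ltr_nat R) -(ltr_pM2r (delta_gt0 hd)).
    exact: le_lt_trans h1 (le_lt_trans hl h2).
  have -> : l = chain_len d t by move: ht; rewrite /chainP => /and4P[_ /eqP -> _ _].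
  apply/flattenP; exists (image (fun t : (k.+1).-tuple X => chain_len d (val t)) predT).
    by apply/mapP; exists k => //; rewrite mem_iota.
  exact: image_f.
have [m [ms [Sm ml0] hm]] := list_min (S := fun l => S l /\ l <= l0)
   (ex_intro2 _ _ l0 (inLs l0 Sl0 (lexx l0)) (conj Sl0 (lexx l0))).
exists m; split => // l Sl.
case: (lerP l l0) => hl; first by apply: hm; [exact: inLs | split].
exact: le_trans ml0 (ltW hl).
Qed.

Lemma W_conv : hahn_converges (euler_partial d) (fun l => \sum_x \sum_y Wm x y l).
Proof.
move=> L; exists (Kb d L) => N hN l hl.
have hlN : l < N%:R * delta d.
  exact: lt_trans hl (lt_le_trans (Kb_spec hd L) (kdelta_mono hN)).
rewrite /euler_partial /rkHM.
rewrite (euler_rank hd (MC_empty hlN)).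
under eq_bigr => n _ do rewrite -sum_cc mulr_sumr.
rewrite exchange_big; apply: eq_bigr => x _.
under eq_bigr => n _ do rewrite mulr_sumr.
rewrite exchange_big; apply: eq_bigr => y _.
by rewrite (W_ext _ _ hlN) big_mkord.
Qed.

End Final.

Unset Implicit Arguments.

Theorem corollary6p18 (R : realType) (X : finType) (d : X -> X -> R)
  (hd : is_quasi_metric d) :
  exists W : X -> X -> R -> rat,
    (forall x y, hahn (W x y)) /\
    is_inverse_similarity d W /\
    hahn_converges (euler_partial d)
                   (fun l => \sum_(x : X) \sum_(y : X) W x y l).
Proof.
exists (Wm d); split; first exact: W_hahn.
split; [exact: W_inv | exact: W_conv].
Qed.
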